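(* For every $\mu\in\mathbb F_q\setminus\{0\}$, the elliptic quadric $\mathcal Q_\mu$ is a $\left(\frac{q^n-1}{q-1}\right)$-ovoid of $\mathcal W_0$, i.e. every generator of $\mathcal W_0$ contains exactly $\frac{q^n-1}{q-1}$ points of $\mathcal Q_\mu$. (Note that for $\mu\neq0$ the quadric $\mathcal Q_\mu$ does not polarize to $\mathcal W_0$.)
   Context: Let $q$ be an even prime power and $n\ge 2$ an integer. Let $\mathrm{PG}(2n+1,q)$ have homogeneous coordinates $(X_1,\dots,X_{2n+2})$. Fix $\delta\in\mathbb F_q$ such that $X^2+X+\delta$ is irreducible over $\mathbb F_q$. For $\mu\in\mathbb F_q$ let $\mathcal Q_\mu$ be the quadric $X_1^2+X_1X_{2n+2}+\delta X_{2n+2}^2+\sum_{i=2}^{n+1}X_iX_{2n+3-i}+\mu(X_{2n}^2+X_{2n}X_{2n+1}+\delta X_{2n+1}^2)=0$, an elliptic quadric. Let $\mathcal W_0$ be the symplectic polar space defined by the alternating form $B_0(X,Y)=\sum_{i=1}^{2n+2}X_iY_{2n+3-i}$ (the polar space to which $\mathcal Q_0$ polarizes); its generators are the totally isotropic $n$-spaces. An $m$-ovoid of a symplectic polar space is a set of points meeting every generator in exactly $m$ points. *)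

(* Defs.v *)
From HB Require Import structures.
From mathcomp Require Import all_boot all_order all_algebra.
Set Implicit Arguments. Unset Strict Implicit. Unset Printing Implicit Defensive.
Import GRing.Theory.
Local Open Scope ring_scope.

Section Defs.
Variables (F : finFieldType) (n : nat).

(* Vectors of F^(2n+2); PG(2n+1,q) lives on their 1-dim subspaces. *)
Definition vecT := 'rV[F]_(n.*2.+2).

(* 1-indexed homogeneous coordinate X_i (i = 1 .. 2n+2). *)
Definition X (x : vecT) (i : nat) : F := x 0 (inord i.-1).

Definition B0 (x y : vecT) : F :=
  \sum_(1 <= i < n.*2.+3) X x i * X y (n.*2.+3 - i).

Definition Qform (delta mu : F) (x : vecT) : F :=
  X x 1 ^+ 2 + X x 1 * X x (n.*2.+2) + delta * X x (n.*2.+2) ^+ 2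
  + \sum_(2 <= i < n.+2) X x i * X x (n.*2.+3 - i)
  + mu * (X x n.*2 ^+ 2 + X x n.*2 * X x n.*2.+1 + delta * X x n.*2.+1 ^+ 2).

Definition pspan (v : vecT) : {set vecT} := [set k *: v | k : F].

Definition PGpoints : {set {set vecT}} := [set pspan v | v in [set v : vecT | v != 0]].

Definition quadric_pts (delta mu : F) : {set {set vecT}} :=
  [set p in PGpoints | [forall x in p, Qform delta mu x == 0]].

(* generators of W_0: totally isotropic projective n-spaces,
   i.e. (n+1)-dimensional vector subspaces on which B0 vanishes *)
Definition generator (U : {vspace vecT}) : Prop :=
  \dim U = n.+1 /\ (forall u v, u \in U -> v \in U -> B0 u v = 0).

Definition pts_in (U : {vspace vecT}) : {set {set vecT}} :=
  [set p in PGpoints | p \subset [set x | x \in U]].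

Definition m_ovoid (S : {set {set vecT}}) (m : nat) : Prop :=
  forall U : {vspace vecT}, generator U -> #|S :&: pts_in U| = m.

End Defs.

(* Main.v *)
Require Import Defs.
From HB Require Import structures.
From mathcomp Require Import all_boot all_order all_algebra all_fingroup all_solvable all_field.
From mathcomp Require Import zify ring.
Set Implicit Arguments. Unset Strict Implicit. Unset Printing Implicit Defensive.
Import GRing.Theory.
Local Open Scope ring_scope.

Lemma sum_split (R : nmodType) (n : nat) (G : nat -> R) :
  \sum_(1 <= i < n.*2.+3) G i =
  G 1%N + G n.*2.+2 + \sum_(2 <= i < n.+2) (G i + G (n.*2.+3 - i)%N).
Proof.
rewrite (@big_cat_nat _ _ _ n.+2) /=; [|lia|lia].
have -> : \sum_(n.+2 <= i < n.*2.+3) G i = \sum_(1 <= i < n.+2) G (n.*2.+3 - i)%N.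
  have -> : (n.+2 = 1 + n.+1)%N by lia.
  rewrite big_addn big_nat_rev /=.
  have -> : (n.*2.+3 - n.+1 = n.+2)%N by lia.
  apply: eq_big_nat => i /andP [h1 h2].
  congr G; lia.
rewrite -big_split /= big_ltn //=.
Qed.

Section Part1.
Variables (F : finFieldType) (n : nat).
Hypothesis h2 : (2 : F) = 0.

Local Notation V := (vecT F n).
Local Notation m := (n.*2.+2).

Lemma addxx (x : F) : x + x = 0.
Proof. by rewrite -mulr2n -mulr_natr h2 mulr0. Qed.

Lemma XD (x y : V) t i : X (x + t *: y) i = X x i + t * X y i.
Proof. by rewrite /X !mxE. Qed.

Lemma X0 i : X (0 : V) i = 0.
Proof. by rewrite /X mxE. Qed.

Lemma B0split (x y : V) : B0 x y =
  X x 1 * X y m + X x m * X y 1 +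
  \sum_(2 <= i < n.+2) (X x i * X y (n.*2.+3 - i) + X x (n.*2.+3 - i) * X y i).
Proof.
rewrite /B0 sum_split.
have -> : (n.*2.+3 - 1 = m)%N by lia.
have -> : (n.*2.+3 - m = 1)%N by lia.
congr (_ + _); apply: eq_big_nat => i /andP [h1 h3].
have -> : (n.*2.+3 - (n.*2.+3 - i) = i)%N by lia.
by [].
Qed.

Lemma Qexp (delta mu : F) (x y : V) t :
  Qform delta mu (x + t *: y) = Qform delta mu x + t ^+ 2 * Qform delta mu y
   + t * (B0 x y + mu * (X x n.*2 * X y n.*2.+1 + X x n.*2.+1 * X y n.*2)).
Proof.
rewrite /Qform B0split !XD.
have -> : \sum_(2 <= i < n.+2) X (x + t *: y) i * X (x + t *: y) (n.*2.+3 - i)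
  = \sum_(2 <= i < n.+2) X x i * X x (n.*2.+3 - i) + t ^+ 2 * \sum_(2 <= i < n.+2) X y i * X y (n.*2.+3 - i)
   + t * \sum_(2 <= i < n.+2) (X x i * X y (n.*2.+3 - i) + X x (n.*2.+3 - i) * X y i).
  by rewrite !mulr_sumr -!big_split; apply: eq_bigr => i _ /=; rewrite !XD; ring.
move: (\sum_(2 <= i < n.+2) X x i * X x (n.*2.+3 - i)) => s1.
move: (\sum_(2 <= i < n.+2) X y i * X y (n.*2.+3 - i)) => s2.
move: (\sum_(2 <= i < n.+2) _) => s3.
move: (X x 1) (X y 1) (X x m) (X y m) (X x n.*2) (X y n.*2) (X x n.*2.+1) (X y n.*2.+1) => a1 b1 a2 b2 a3 b3 a4 b4.
pose E := t * (a1 * b1 + delta * a2 * b2 + mu * a3 * b3 + mu * delta * a4 * b4).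
transitivity ((a1 ^+ 2 + a1 * a2 + delta * a2 ^+ 2 + s1 +
   mu * (a3 ^+ 2 + a3 * a4 + delta * a4 ^+ 2)) +
  t ^+ 2 * (b1 ^+ 2 + b1 * b2 + delta * b2 ^+ 2 + s2 +
   mu * (b3 ^+ 2 + b3 * b4 + delta * b4 ^+ 2)) +
  t * (a1 * b2 + a2 * b1 + s3 + mu * (a3 * b4 + a4 * b3)) + 2 * E).
  rewrite /E; ring.
by rewrite h2 mul0r addr0.
Qed.

Lemma Qform0 delta mu : Qform delta mu (0 : V) = 0.
Proof.
rewrite /Qform !X0 big1 => [|i _]; last by rewrite X0 mul0r.
by rewrite expr0n /= !(mul0r, mulr0, add0r, addr0).
Qed.

Lemma QZ delta mu (y : V) t : Qform delta mu (t *: y) = t ^+ 2 * Qform delta mu y.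
Proof.
have := Qexp delta mu 0 y t; rewrite add0r Qform0 add0r => ->.
rewrite /B0 big1 => [|i _]; last by rewrite X0 mul0r.
by rewrite !X0 !mul0r add0r addr0 mulr0 mulr0 addr0.
Qed.

Lemma Qadd delta mu (x y : V) :
  Qform delta mu (x + y) = Qform delta mu x + Qform delta mu y
   + (B0 x y + mu * (X x n.*2 * X y n.*2.+1 + X x n.*2.+1 * X y n.*2)).
Proof. by have := Qexp delta mu x y 1; rewrite scale1r expr1n !mul1r. Qed.
End Part1.
Section Part2.
Variables (F : finFieldType) (n : nat).
Local Notation V := (vecT F n).
Local Notation m := (n.*2.+2).

Definition revr (y : V) : V := \row_l y 0 (rev_ord l).
Fact revr_lin : linear revr.
Proof. by move=> a x y; apply/rowP => l; rewrite !mxE. Qed.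
HB.instance Definition _ := GRing.isLinear.Build F V V _ revr revr_lin.

Lemma B0E (x y : V) : B0 x y = \sum_(l < m) x 0 l * revr y 0 l.
Proof.
rewrite /B0 big_add1 /= big_mkord; apply: eq_bigr => i _.
rewrite /X /= mxE; congr (x 0 _ * y 0 _); apply: val_inj; rewrite /= inordK //=; lia.
Qed.

Lemma rank_lin (k : nat) (M : 'M[F]_(k, m)) (f : {linear V -> V}) :
  injective f -> \rank (M *m lin1_mx f) = \rank M.
Proof.
move=> injf; apply: mxrankMfree; apply: inj_row_free => v.
rewrite mul_rV_lin1 => fv0; apply: injf; by rewrite fv0 linear0.
Qed.

Lemma rank_basis (A : {vspace V}) :
  \rank (\matrix_(i < \dim A) tnth (vbasis A) i) = \dim A.
Proof.
Import VectorInternalTheory.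
set M := \matrix_(i < \dim A) _.
have -> : M = row_base (vs2mx A) *m lin1_mx (@r2v F V).
  apply/row_matrixP => i; rewrite row_mul mul_rV_lin1 /M rowK.
  rewrite unlock /vbasis_def tnth_mktuple //.
rewrite mxrankMfree; first by rewrite (eqP (row_base_free _)).
apply: inj_row_free => v; rewrite mul_rV_lin1 => h.
by rewrite -(r2vK v) h linear0.
Qed.

Lemma revr_inj : injective revr.
Proof.
move=> x y h; apply/rowP => l; move/rowP: h => /(_ (rev_ord l)).
by rewrite !mxE rev_ordK.
Qed.

Lemma AL (A B : {vspace V}) :
  (forall a b, a \in A -> b \in B -> B0 a b = 0) -> (\dim A + \dim B <= m)%N.
Proof.
move=> hAB.
set MA := \matrix_(i < \dim A) tnth (vbasis A) i.
set MB := \matrix_(i < \dim B) tnth (vbasis B) i.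
pose RB := MB *m lin1_mx revr.
have rA : \rank MA = \dim A by apply: rank_basis.
have rB : \rank RB = \dim B by rewrite /RB rank_lin ?rank_basis //; exact: revr_inj.
have h0 : MA *m RB^T = 0.
  apply/matrixP => i j; rewrite !mxE.
  have hb := hAB (tnth (vbasis A) i) (tnth (vbasis B) j)
     (vbasis_mem (mem_tnth _ _)) (vbasis_mem (mem_tnth _ _)).
  rewrite -[RHS]hb B0E; apply: eq_bigr => l _; rewrite !mxE.
  congr (_ * _).
  transitivity ((tnth (vbasis B) j *m lin1_mx revr) 0 l).
    by rewrite mxE; apply: eq_bigr => k _; rewrite /MB mxE.
  by rewrite mul_rV_lin1 mxE.
have : (MA <= kermx RB^T)%MS by rewrite sub_kermx h0.
move/mxrankS; rewrite mxrank_ker mxrank_tr rA rB => h.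
have := rank_leq_col RB; rewrite rB; lia.
Qed.

Lemma B0Dl (x y z : V) : B0 (x + y) z = B0 x z + B0 y z.
Proof. by rewrite !B0E -big_split; apply: eq_bigr => l _; rewrite !mxE mulrDl. Qed.
Lemma B0Dr (x y z : V) : B0 z (x + y) = B0 z x + B0 z y.
Proof. by rewrite !B0E -big_split; apply: eq_bigr => l _; rewrite !mxE mulrDr. Qed.
Lemma B0Zr (x z : V) t : B0 z (t *: x) = t * B0 z x.
Proof. by rewrite !B0E mulr_sumr; apply: eq_bigr => l _; rewrite !mxE mulrCA. Qed.
Lemma B0Zl (x z : V) t : B0 (t *: x) z = t * B0 x z.
Proof. by rewrite !B0E mulr_sumr; apply: eq_bigr => l _; rewrite !mxE mulrA. Qed.

Definition projk k (idx : 'I_k -> 'I_m) (x : V) : 'rV[F]_k := \row_j x 0 (idx j).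
Fact projk_lin k idx : linear (@projk k idx).
Proof. by move=> a x y; apply/rowP => l; rewrite !mxE. Qed.
HB.instance Definition _ k idx := GRing.isLinear.Build F V 'rV[F]_k _ (@projk k idx) (projk_lin idx).

Definition KerS k (idx : 'I_k -> 'I_m) : {vspace V} := lker (linfun (projk idx)).

Lemma memKer k idx (x : V) : (x \in KerS idx) = [forall j : 'I_k, x 0 (idx j) == 0].
Proof.
rewrite /KerS memv_ker lfunE /=; apply/eqP/forallP => [h j | h].
  by move/rowP: h => /(_ j); rewrite !mxE => ->.
by apply/rowP => j; rewrite !mxE; apply/eqP.
Qed.

Lemma dimKer k idx : (m - k <= \dim (@KerS k idx))%N.
Proof.
have := limg_ker_dim (linfun (projk idx)) fullv.
rewrite capfv dimvf /dim /= mul1n.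
have : (\dim (linfun (projk idx) @: fullv) <= \dim (fullv : {vspace 'rV[F]_k}))%N.
  by apply: dimvS; apply: subvf.
rewrite dimvf /dim /= mul1n /KerS; move: (\dim (lker _)) (\dim (limg _)) => a b h1 <-; lia.
Qed.
End Part2.


Section Part3.
Variables (F : finFieldType) (n : nat) (delta : F).
Hypothesis h2 : (2 : F) = 0.
Hypothesis hN : forall a b : F, a ^+ 2 + a * b + delta * b ^+ 2 = 0 -> a = 0 /\ b = 0.
Local Notation V := (vecT F n).
Local Notation m := (n.*2.+2).

Definition idxG (j : 'I_n) : 'I_m := inord (n.+1 + j).

Lemma memG (x : V) : x \in KerS F idxG -> forall l : 'I_m, (n < l)%N -> (l <= n.*2)%N -> x 0 l = 0.
Proof.
rewrite memKer => /forallP h l h1 h3.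
have hj : (l - n.+1 < n)%N by lia.
have := eqP (h (Ordinal hj)); congr (x 0 _ = 0); apply: val_inj; rewrite /= inordK /=; lia.
Qed.

Lemma Xval (x : V) (i : nat) (l : 'I_m) : i.-1 = l -> X x i = x 0 l.
Proof. by move=> h; rewrite /X; congr (x 0 _); apply: val_inj; rewrite /= inordK h. Qed.

Lemma elliptic (W : {vspace V}) :
  (forall w, w \in W -> Qform delta 0 w = 0) -> (\dim W <= n)%N.
Proof.
move=> hW.
have hWW : forall w1 w2, w1 \in W -> w2 \in W -> B0 w1 w2 = 0.
  move=> w1 w2 h1 h3; have := Qadd h2 delta 0 w1 w2.
  by rewrite !hW ?memvD // mul0r !addr0 !add0r => <-.
set G := KerS F idxG.
have hK : forall y, y \in (W :&: G)%VS -> y 0 ord0 = 0 /\ y 0 ord_max = 0.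
  move=> y /memv_capP [yW yG].
  have := hW y yW; rewrite /Qform big_nat_cond big1 => [|i /andP[/andP [hi1 hi3] _]].
    rewrite mul0r addr0 addr0 (@Xval y 1 ord0) // (@Xval y m ord_max) //.
    exact: hN.
  have hl : ((n.*2.+3 - i).-1 < m)%N by lia.
  rewrite (@Xval y (n.*2.+3 - i) (Ordinal hl)) // (memG yG) ?mulr0 //= ; lia.
have hAL := @AL F n (W + G)%VS (W :&: G)%VS.
have := dimv_sum_cap W G.
have := dimKer F idxG.
suff : (\dim (W + G) + \dim (W :&: G) <= m)%N.
  move: (\dim (W + G)) (\dim (W :&: G)) (\dim G) (\dim W) => a b c d; lia.
apply: hAL => x y /memv_addP [w wW [g gG ->]] yK.
rewrite B0Dl hWW //; last by move/memv_capP: yK => [].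
rewrite add0r B0E big1 // => l _; rewrite mxE.
have [yG] : y \in G by move/memv_capP: yK => [].
have [y0 y1] := hK y yK.
case: (ltnP n l) => hl.
  case: (leqP l n.*2) => hl2; first by rewrite (memG gG) ?mul0r.
  have -> : rev_ord l = ord0 by apply: val_inj => /=; lia.
  by rewrite y0 mulr0.
case: (posnP l) => hl0.
  have -> : rev_ord l = ord_max by apply: val_inj => /=; lia.
  by rewrite y1 mulr0.
by rewrite (memG yG) ?mulr0 //=; lia.
Qed.
End Part3.

Section Part4.
Variables (F : finFieldType) (n : nat) (delta : F).
Hypothesis h2 : (2 : F) = 0.
Hypothesis hN : forall a b : F, a ^+ 2 + a * b + delta * b ^+ 2 = 0 -> a = 0 /\ b = 0.
Hypothesis hn : (2 <= n)%N.
Local Notation V := (vecT F n).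
Local Notation m := (n.*2.+2).

Definition idxSp (j : 'I_2) : 'I_m := inord (n.*2.-1 + j).
Definition idxS (j : 'I_(n.*2)) : 'I_m := inord (if j == 0 :> nat then 0 else j.+2).

Lemma memSp (p : V) : p \in KerS F idxSp ->
  forall l : 'I_m, (l == n.*2.-1 :> nat) || (l == n.*2 :> nat) -> p 0 l = 0.
Proof.
rewrite memKer => /forallP h l hl.
have hj : (l - n.*2.-1 < 2)%N by lia.
have := eqP (h (Ordinal hj)); congr (p 0 _ = 0); apply: val_inj; rewrite /= inordK /=; lia.
Qed.

Lemma memS (s : V) : s \in KerS F idxS ->
  forall l : 'I_m, (l != 1 :> nat) -> (l != 2 :> nat) -> s 0 l = 0.
Proof.
rewrite memKer => /forallP h l hl1 hl2.
case: (posnP l) => hl0.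
  have hj : (0 < n.*2)%N by lia.
  have := eqP (h (Ordinal hj)); congr (s 0 _ = 0); apply: val_inj; rewrite /= inordK /=; lia.
have hj : (l - 2 < n.*2)%N by have := ltn_ord l; lia.
have := eqP (h (Ordinal hj)); congr (s 0 _ = 0); apply: val_inj; rewrite /= inordK /=.
  case: ifP => /eqP; lia.
case: ifP => /eqP; lia.
Qed.

Lemma B0_SpS (p s : V) : p \in KerS F idxSp -> s \in KerS F idxS -> B0 p s = 0.
Proof.
move=> hp hs; rewrite B0E big1 // => l _; rewrite mxE.
case: (boolP ((l == n.*2.-1 :> nat) || (l == n.*2 :> nat))) => hl.
  by rewrite (memSp hp hl) mul0r.
rewrite (memS hs) ?mulr0 //=; apply/eqP; move: hl; case: l => l hl /=; lia.
Qed.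

Lemma QS (s : V) : s \in KerS F idxS -> Qform delta 0 s = 0.
Proof.
move=> hs; rewrite /Qform big_nat_cond big1 => [|i /andP[/andP [hi1 hi3] _]].
  rewrite (@Xval F n s 1 ord0) // (@Xval F n s m ord_max) // !(memS hs) //=; try lia.
  rewrite expr0n /= !(mul0r, mulr0, addr0) //.
have hl : ((n.*2.+3 - i).-1 < m)%N by lia.
rewrite (@Xval F n s (n.*2.+3 - i) (Ordinal hl)) // (memS hs) ?mulr0 //=; lia.
Qed.

Lemma exists_v (U : {vspace V}) :
  \dim U = n.+1 -> (forall u v, u \in U -> v \in U -> B0 u v = 0) ->
  exists v, [/\ v \in U, X v n.*2 = 0, X v n.*2.+1 = 0 & Qform delta 0 v != 0].
Proof.
move=> hdim hU.
have hx1 : (n.*2.-1 < m)%N by lia.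
have hx2 : (n.*2 < m)%N by lia.
have [/existsP [v /and4P [h1 /eqP h3 /eqP h4 h5]] | h] := boolP
  [exists v : V, [&& v \in U, X v n.*2 == 0, X v n.*2.+1 == 0 & Qform delta 0 v != 0]].
  by exists v.
exfalso.
set Sp := KerS F idxSp.
set S := KerS F idxS.
set T := (U :&: Sp)%VS.
have hT : forall v, v \in T -> Qform delta 0 v = 0.
  move=> v /memv_capP [vU vSp]; apply/eqP; apply: contraNT h => hq.
  apply/existsP; exists v; rewrite vU hq andbT.
  rewrite (@Xval F n v n.*2 (Ordinal hx1)) // (@Xval F n v n.*2.+1 (Ordinal hx2)) //.
  by rewrite !(memSp vSp) //= eqxx ?orbT.
have hW : forall w, w \in (T + S)%VS -> Qform delta 0 w = 0.
  move=> w /memv_addP [t tT [s sS ->]].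
  rewrite (Qadd h2) hT // QS // B0_SpS //; last by move/memv_capP: tT => [].
  by rewrite mul0r !addr0.
have := elliptic h2 hN hW.
have hAL := @AL F n (U + Sp)%VS (U :&: S)%VS.
have hAL' : (\dim (U + Sp) + \dim (U :&: S) <= m)%N.
  apply: hAL => x y /memv_addP [u uU [p pSp ->]] /memv_capP [yU yS].
  by rewrite B0Dl hU // B0_SpS // add0r.
have e1 := dimv_sum_cap U Sp.
have e2 := dimv_sum_cap T S.
have d1 := dimKer F idxSp.
have d2 := dimKer F idxS.
have d3 : (\dim (T :&: S) <= \dim (U :&: S))%N.
  apply: dimvS; apply/subvP => x /memv_capP [/memv_capP [xU _] xS].
  by rewrite memv_cap xU xS.
move: hAL' e1 e2 d1 d2 d3; rewrite -/T hdim.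
move: (\dim (U + Sp)) (\dim (U :&: S)) (\dim T) (\dim (T + S)) (\dim (T :&: S)) (\dim Sp) (\dim S).
move=> a b c d e f g; lia.
Qed.
End Part4.

Section Part5.
Variables (F : finFieldType) (n : nat) (delta mu : F).
Hypothesis h2 : (2 : F) = 0.
Local Notation V := (vecT F n).
Local Notation m := (n.*2.+2).

Lemma sq_inj : injective (fun s : F => s ^+ 2).
Proof.
move=> s t /= h.
have : (s + t) ^+ 2 = 0.
  rewrite sqrrD h mulr2n (addxx h2 (s * t)) addr0 (addxx h2) //.
move/eqP; rewrite expf_eq0 /= => /eqP hst.
by rewrite -[s]addr0 -(addxx h2 t) addrA hst add0r.
Qed.

Lemma sq_surj (a : F) : exists s : F, s ^+ 2 = a.
Proof.
have [g _ hg] := injF_bij sq_inj.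
by exists (g a); rewrite hg.
Qed.

Lemma count_zeros (U : {vspace V}) (v : V) :
  v \in U -> X v n.*2 = 0 -> X v n.*2.+1 = 0 -> Qform delta mu v != 0 ->
  (forall u w, u \in U -> w \in U -> B0 u w = 0) ->
  (#|[set x : V | (x \in U) && (Qform delta mu x == 0%R)]| * #|F| = #|F| ^ \dim U)%N.
Proof.
move=> vU hv1 hv2 hQv hU.
set Z := [set x : V | _].
have hq : forall z t, z \in U -> Qform delta mu (z + t *: v) = Qform delta mu z + t ^+ 2 * Qform delta mu v.
  by move=> z t zU; rewrite (Qexp h2) hU // hv1 hv2 !(mulr0, addr0).
pose f := fun p : V * F => p.1 + p.2 *: v.
rewrite -(card_vspace U) -cardsT -cardsX.
have -> : (#|U| = #|f @: setX Z [set: F]|)%N.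
  rewrite -cardsE; apply: eq_card => x; rewrite !inE.
  apply/idP/imsetP => [xU | [[z t] /setXP [zZ _] ->]].
    have [s hs] := sq_surj (Qform delta mu x / Qform delta mu v).
    exists (x - s *: v, s); rewrite ?inE.
      rewrite memvB ?memvZ //=.
      by rewrite -scaleNr hq ?memvB ?memvZ // sqrrN hs mulfVK // (addxx h2) eqxx.
    by rewrite /f /= subrK.
  by move: zZ; rewrite inE => /andP [zU _]; rewrite /f /= memvD ?memvZ.
rewrite card_in_imset // => [[z t] [z' t']] /setXP [zZ _] /setXP [z'Z _].
move: zZ z'Z; rewrite !inE => /andP [zU /eqP zq] /andP [z'U /eqP z'q].
rewrite /f /= => h.
have hz' : z' = z + (t - t') *: v by rewrite scalerBl addrA h addrK.
have : (t - t') ^+ 2 * Qform delta mu v = 0 by rewrite -[_ * _]add0r -zq -(hq _ _ zU) -hz' z'q.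
move/eqP; rewrite mulf_eq0 (negbTE hQv) orbF expf_eq0 /= subr_eq0 => /eqP htt.
by move: hz'; rewrite htt subrr scale0r addr0 => ->.
Qed.
End Part5.
Lemma char2 (F : finFieldType) : ~~ odd #|F| -> (2 : F) = 0.
Proof.
move=> hev; have [p pr hp] := finPcharP F.
have pG := abelem_pgroup (fin_ring_pchar_abelem hp).
have [_ _ [k hk]] := pgroup_pdiv pG (finNzRing_nontrivial F).
rewrite cardsT in hk.
have e : p = 2%N.
  apply/eqP; rewrite eq_sym -(@dvdn_prime2 2 p) //.
  have : (2 %| p ^ k.+1)%N by rewrite -hk dvdn2.
  by rewrite Euclid_dvdX // => /andP [].
by rewrite e in hp; apply: (pcharf0 hp).
Qed.

Lemma anis (F : finFieldType) (delta : F) :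
  irreducible_poly ('X^2 + 'X + delta%:P : {poly F}) ->
  forall a b : F, a ^+ 2 + a * b + delta * b ^+ 2 = 0 -> a = 0 /\ b = 0.
Proof.
move=> [hsz hirr] a b h.
have hsize : size ('X^2 + 'X + delta%:P : {poly F}) = 3%N.
  by rewrite -addrA size_addl ?size_polyXn // size_XaddC.
have [b0 | bn0] := eqVneq b 0.
  move: h; rewrite b0 expr0n /= !(mulr0, addr0) => /eqP; rewrite expf_eq0 /= => /eqP.
  by [].
exfalso.
pose x := a / b.
have hr : root ('X^2 + 'X + delta%:P) x.
  rewrite rootE !hornerE /x.
  have -> : (a / b) ^+ 2 + a / b + delta = (a ^+ 2 + a * b + delta * b ^+ 2) / b ^+ 2.
    by field.
  by rewrite h mul0r.
have hd : ('X - x%:P) %| ('X^2 + 'X + delta%:P) by rewrite dvdp_XsubCl.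
have := hirr _ _ hd; rewrite size_XsubC => /(_ isT) /eqp_size.
by rewrite size_XsubC hsize.
Qed.
Section Part6.
Variables (F : finFieldType) (n : nat) (delta mu : F).
Hypothesis h2 : (2 : F) = 0.
Local Notation V := (vecT F n).

Lemma proj_count (U : {vspace V}) :
  (#|quadric_pts n delta mu :&: pts_in U| * (#|F| - 1) =
   #|[set x : V | (x \in U) && (Qform delta mu x == 0%R)]| - 1)%N.
Proof.
set Z := [set x : V | _].
set Z' := Z :\ 0.
have hZ0 : (0 : V) \in Z by rewrite inE mem0v Qform0 eqxx.
have -> : quadric_pts n delta mu :&: pts_in U = (@pspan F n) @: Z'.
  apply/setP => p; rewrite !inE; apply/idP/imsetP.
    move=> /andP [/andP [hp hq] /andP [_ hsub]].
    case/imsetP: hp => v; rewrite inE => vn0 pv.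
    have vp : v \in p by rewrite pv; apply/imsetP; exists 1; rewrite ?scale1r.
    exists v => //; rewrite !inE vn0 /=.
    move/subsetP: hsub => /(_ v vp); rewrite inE => ->.
    by move/forallP: hq => /(_ v); rewrite vp.
  move=> [z]; rewrite !inE => /andP [zn0 /andP [zU /eqP zq]] ->.
  have hP : pspan z \in PGpoints F n by apply/imsetP; exists z; rewrite ?inE.
  rewrite hP /=; apply/andP; split.
    apply/forallP => x; apply/implyP => /imsetP [k _ ->].
    by rewrite QZ // zq mulr0.
  by apply/subsetP => x /imsetP [k _ ->]; rewrite inE memvZ.
have hZ' : #|Z'| = (#|Z| - 1)%N by rewrite (cardsD1 0 Z) hZ0 /= subn1 add1n.
rewrite -hZ' -[#|Z'|]sum1_card (partition_big_imset (@pspan F n)) /= -sum_nat_const.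
apply: eq_bigr => p /imsetP [z0 z0Z ->].
rewrite sum1_card.
have hz0 : z0 != 0 by move: z0Z; rewrite !inE => /andP [].
move: z0Z; rewrite !inE => /andP [_ /andP [z0U /eqP z0q]].
rewrite (@eq_card _ _ (pspan z0 :\ 0)); last first.
  move=> z; rewrite [in LHS]unfold_in /= !inE; apply/idP/idP.
    move=> /andP [/and3P [zn0 _ _] /eqP hps]; rewrite zn0 /= -hps.
    by apply/imsetP; exists 1; rewrite ?scale1r.
  move=> /andP [zn0 /imsetP [k _ zk]].
  have kn0 : k != 0 by apply: contraNneq zn0 => k0; rewrite zk k0 scale0r.
  rewrite zn0 zk memvZ //= QZ // z0q mulr0 eqxx /=.
  apply/eqP/setP => x; apply/imsetP/imsetP => [[c _ ->] | [c _ ->]].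
    by exists (c * k); rewrite ?scalerA.
  by exists (c / k); rewrite ?scalerA ?mulfVK.
have hc : #|pspan z0| = #|F|.
  rewrite card_imset //; move=> k1 k2 /= /eqP; rewrite -subr_eq0 -scalerBl scaler_eq0.
  by rewrite (negbTE hz0) orbF subr_eq0 => /eqP.
have h0 : (0 : V) \in pspan z0 by apply/imsetP; exists 0; rewrite ?scale0r.
have := cardsD1 (0 : V) (pspan z0); rewrite hc h0 /= => ->.
by rewrite add1n subn1.
Qed.
End Part6.

Theorem mainTheorem6 (F : finFieldType) (n : nat) (delta mu : F) :
  ~~ odd #|F| ->
  (2 <= n)%N ->
  irreducible_poly ('X^2 + 'X + delta%:P : {poly F}) ->
  mu != 0 ->
  m_ovoid (quadric_pts n delta mu) ((#|F| ^ n - 1) %/ (#|F| - 1))%N.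
Proof.
move=> hev hn hirr _ U [hdim hU].
have h2 := char2 hev.
have hN := anis hirr.
have [v [vU hv1 hv2 hq0]] := exists_v h2 hN hn hdim hU.
have hqv : Qform delta mu v != 0.
  by move: hq0; rewrite /Qform hv1 hv2 !(expr0n, mulr0, mul0r, addr0).
have hc := @count_zeros F n delta mu h2 U v vU hv1 hv2 hqv hU.
have hp := proj_count delta mu h2 U.
have hq1 := finNzRing_gt1 F.
rewrite hdim expnS [(#|F| * _)%N]mulnC in hc.
have hZ : #|[set x : vecT F n | (x \in U) && (Qform delta mu x == 0%R)]| = (#|F| ^ n)%N.
  apply/eqP; rewrite -(@eqn_pmul2r #|F|); [exact/eqP | exact: ltnW hq1].
rewrite hZ in hp; rewrite -hp mulnK // subn_gt0; exact: hq1.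
Qed.
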